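(* Consider momentum gradient flow with parameter $\lambda>0$ on a 2-layer diagonal linear network as described in the context. Assume $u_t,v_t\in L^\infty(0,\infty)$ and that $\Delta_\infty=\lim_{t\to\infty}\Delta_t$ has all coordinates nonzero. Then the limit $\lim_{t\to\infty}\int_0^t\nabla L(\theta_s)\,\mathrm{d}s=\int_0^\infty\nabla L(\theta_t)\,\mathrm{d}t$ exists, and consequently $\lim_{t\to\infty}\int_0^t\nabla L(\theta_s)e^{-\frac{t-s}{\lambda}}\,\mathrm{d}s=0$.
   Context: Data $x_1,\dots,x_n\in\mathbb{R}^d$, $y\in\mathbb{R}^n$, loss $L(\theta)=\frac{1}{2n}\sum_{i=1}^n(y_i-\langle x_i,\theta\rangle)^2$. Momentum gradient flow on the diagonal linear network: $(u_t,v_t)$ solves $\lambda\ddot u_t+\dot u_t+\nabla L(\theta_t)\odot v_t=0$, $\lambda\ddot v_t+\dot v_t+\nabla L(\theta_t)\odot u_t=0$, $\theta_t=u_t\odot v_t$, with $\dot u_0=\dot v_0=0$ and $|u_0^2-v_0^2|$ having all coordinates nonzero. $\Delta_t=|u_t^2-v_t^2|$ coordinate-wise. *)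

(* Defs.v *)
From Stdlib Require Import Reals.
From Coquelicot Require Import Coquelicot.
Open Scope R_scope.

Fixpoint rsum (N : nat) (f : nat -> R) : R :=
  match N with
  | O => 0
  | S k => rsum k f + f k
  end.

(* Data: X i k = k-th coordinate of x_i (i < n, k < d), y i = y_i.
   Vectors of R^d are functions nat -> R, only coordinates k < d matter. *)
Definition inner (d : nat) (a b : nat -> R) : R := rsum d (fun k => a k * b k).

Definition Loss (n d : nat) (X : nat -> nat -> R) (y : nat -> R) (theta : nat -> R) : R :=
  / (2 * INR n) * rsum n (fun i => (y i - inner d (X i) theta) ^ 2).

Definition gradL (n d : nat) (X : nat -> nat -> R) (y : nat -> R) (theta : nat -> R) (j : nat) : R :=
  - / INR n * rsum n (fun i => (y i - inner d (X i) theta) * X i j).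

(* theta_t = u_t (.) v_t, as coordinate functions; u j t = j-th coordinate of u at time t *)
Definition theta_of (u v : nat -> R -> R) (t : R) : nat -> R := fun j => u j t * v j t.

(* Main.v *)
Require Import Defs.
From Stdlib Require Import Reals Lra Lia Psatz FunctionalExtensionality Classical.
From Coquelicot Require Import Coquelicot.
Open Scope R_scope.

Lemma rsum_ext N f g : (forall k, (k < N)%nat -> f k = g k) -> rsum N f = rsum N g.
Proof. induction N; simpl; intros H; auto. rewrite IHN by (intros; apply H; lia). rewrite H by lia; auto. Qed.

Lemma rsum_plus N f g : rsum N (fun k => f k + g k) = rsum N f + rsum N g.
Proof. induction N; simpl; [lra|rewrite IHN; lra]. Qed.

Lemma rsum_minus N f g : rsum N (fun k => f k - g k) = rsum N f - rsum N g.
Proof. induction N; simpl; [lra|rewrite IHN; lra]. Qed.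

Lemma rsum_scal N c f : rsum N (fun k => c * f k) = c * rsum N f.
Proof. induction N; simpl; [lra|rewrite IHN; lra]. Qed.

Lemma rsum_scalr N c f : rsum N (fun k => f k * c) = rsum N f * c.
Proof. induction N; simpl; [lra|rewrite IHN; lra]. Qed.

Lemma rsum_zero N : rsum N (fun _ => 0) = 0.
Proof. induction N; simpl; [lra|rewrite IHN; lra]. Qed.

Lemma rsum_le N f g : (forall k, (k < N)%nat -> f k <= g k) -> rsum N f <= rsum N g.
Proof. induction N; simpl; intros H; [lra|]. assert (f N <= g N) by (apply H; lia).
  assert (rsum N f <= rsum N g) by (apply IHN; intros; apply H; lia). lra. Qed.

Lemma rsum_nonneg N f : (forall k, (k < N)%nat -> 0 <= f k) -> 0 <= rsum N f.
Proof. intros H. rewrite <- (rsum_zero N). apply rsum_le; auto. Qed.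

Lemma rsum_swap N M (f : nat -> nat -> R) :
  rsum N (fun i => rsum M (fun k => f i k)) = rsum M (fun k => rsum N (fun i => f i k)).
Proof. induction N; simpl. rewrite rsum_zero; auto. rewrite IHN, <- rsum_plus; auto. Qed.

Lemma rsum_single_le N f k : (forall i, (i < N)%nat -> 0 <= f i) -> (k < N)%nat -> f k <= rsum N f.
Proof. induction N; simpl; intros H Hk; [lia|].
  destruct (Nat.eq_dec k N). subst. assert (0 <= rsum N f) by (apply rsum_nonneg; intros; apply H; lia). lra.
  assert (f k <= rsum N f) by (apply IHN; [intros; apply H|]; lia). assert (0 <= f N) by (apply H; lia). lra. Qed.

Lemma rsum_sq_zero N f : rsum N (fun i => f i ^ 2) = 0 -> forall i, (i < N)%nat -> f i = 0.
Proof. intros H i Hi. assert (f i ^ 2 <= 0). { rewrite <- H. apply (rsum_single_le N (fun i => f i ^ 2)); auto. intros; nra. }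
  nra. Qed.

Lemma rsum_abs N f : Rabs (rsum N f) <= rsum N (fun k => Rabs (f k)).
Proof. induction N; simpl. rewrite Rabs_R0; lra.
  pose proof (Rabs_triang (rsum N f) (f N)). lra. Qed.

Lemma quad_aux A B C a b : 0 <= A -> 0 <= B -> C ^ 2 <= A * B -> 0 <= a^2 * B - 2 * a * b * C + b ^2 * A.
Proof. intros HA HB HC. destruct (Req_dec B 0).
  subst. assert (C = 0) by nra. subst. nra.
  assert (0 < B) by lra.
  assert (0 <= B * (a^2 * B - 2 * a * b * C + b ^2 * A)).
  { replace (B * (a^2 * B - 2 * a * b * C + b ^2 * A)) with ((a * B - b * C)^2 + b^2 * (A * B - C^2)) by ring. apply Rplus_le_le_0_compat. apply pow2_ge_0. apply Rmult_le_pos. apply pow2_ge_0. lra. }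
  destruct (Rle_lt_dec 0 (a^2 * B - 2 * a * b * C + b ^2 * A)); auto.
  assert (B * (a^2 * B - 2 * a * b * C + b ^2 * A) < 0) by (rewrite <- (Rmult_0_r B); apply Rmult_lt_compat_l; lra). lra. Qed.

Lemma rsum_CS N a b : (rsum N (fun k => a k * b k)) ^ 2 <= rsum N (fun k => a k ^ 2) * rsum N (fun k => b k ^ 2).
Proof. induction N; simpl. lra.
  assert (0 <= rsum N (fun k => a k ^ 2)) by (apply rsum_nonneg; intros; nra).
  assert (0 <= rsum N (fun k => b k ^ 2)) by (apply rsum_nonneg; intros; nra).
  pose proof (quad_aux _ _ _ (a N) (b N) H H0 IHN).
  set (S := rsum N (fun k => a k * b k)) in *. set (A := rsum N (fun k => a k ^ 2)) in *.
  set (B := rsum N (fun k => b k ^ 2)) in *.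
  assert ((S + a N * b N) ^ 2 <= (A + a N ^ 2) * (B + b N ^ 2)).
  { replace ((A + a N ^ 2) * (B + b N ^ 2) - (S + a N * b N) ^ 2) with ((A*B - S^2) + (a N ^ 2 * B - 2 * a N * b N * S + b N ^ 2 * A)) by ring. lra. }
  exact H2. Qed.

Lemma rsum_derive N (f df : nat -> R -> R) t :
  (forall k, (k < N)%nat -> is_derive (f k) t (df k t)) ->
  is_derive (fun s => rsum N (fun k => f k s)) t (rsum N (fun k => df k t)).
Proof. induction N; simpl; intros H. apply is_derive_Reals, derivable_pt_lim_const.
  apply (is_derive_plus (fun s => rsum N (fun k => f k s)) (f N)). apply IHN; intros; apply H; lia. apply H; lia. Qed.

Definition Am (X : nat -> nat -> R) (m : nat) (z : nat -> R) (i : nat) : R := rsum m (fun k => X i k * z k).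
Definition upd (f : nat -> R) (m : nat) (a : R) : nat -> R := fun k => if Nat.eq_dec k m then a else f k.

Lemma rsum_upd m f a (F : R -> R) : rsum m (fun k => F (upd f m a k)) = rsum m (fun k => F (f k)).
Proof. apply rsum_ext; intros k Hk. unfold upd. destruct (Nat.eq_dec k m); [lia|auto]. Qed.

Lemma Am_S_upd X m f a i : Am X (S m) (upd f m a) i = Am X m f i + X i m * a.
Proof. unfold Am; simpl. f_equal. apply rsum_ext; intros k Hk; unfold upd; destruct (Nat.eq_dec k m); [lia|auto].
  unfold upd; destruct (Nat.eq_dec m m); [auto|lia]. Qed.

Lemma Am_lin X m f g a b i : Am X m (fun k => a * f k + b * g k) i = a * Am X m f i + b * Am X m g i.
Proof. unfold Am. rewrite <- !rsum_scal, <- rsum_plus. apply rsum_ext; intros; ring. Qed.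

Lemma rsum_S m f : rsum (S m) f = rsum m f + f m.
Proof. reflexivity. Qed.

Lemma Am_add X m f g c i : Am X m (fun k => f k + c * g k) i = Am X m f i + c * Am X m g i.
Proof. unfold Am. rewrite <- rsum_scal, <- rsum_plus. apply rsum_ext; intros; ring. Qed.

Lemma Am_sub X m f g c i : Am X m (fun k => f k - c * g k) i = Am X m f i - c * Am X m g i.
Proof. unfold Am. rewrite <- rsum_scal, <- rsum_minus. apply rsum_ext; intros; ring. Qed.

Lemma Am_S X m f i : Am X (S m) f i = Am X m f i + X i m * f m.
Proof. reflexivity. Qed.

Lemma Am_orth X n m q e : (forall k, (k < m)%nat -> rsum n (fun i => X i k * e i) = 0) ->
  rsum n (fun i => Am X m q i * e i) = 0.
Proof. intros H. unfold Am.
  transitivity (rsum n (fun i => rsum m (fun k => q k * (X i k * e i)))).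
  apply rsum_ext; intros. rewrite <- rsum_scalr. apply rsum_ext; intros; ring.
  rewrite rsum_swap. transitivity (rsum m (fun k => 0)). apply rsum_ext; intros k Hk.
  rewrite rsum_scal, H; auto; ring. apply rsum_zero. Qed.

Lemma LA X n m :
  (exists K, 0 < K /\ forall z, exists dl, (forall i, (i < n)%nat -> Am X m dl i = Am X m z i) /\
       rsum m (fun k => dl k ^ 2) <= K * rsum n (fun i => Am X m z i ^ 2)) /\
  (forall b, exists w, forall k, (k < m)%nat -> rsum n (fun i => X i k * (Am X m w i - b i)) = 0).
Proof.
  induction m.
  { split. exists 1. split. lra. intros z. exists z. split; auto. simpl.
    assert (0 <= rsum n (fun i => Am X 0 z i ^ 2)) by (apply rsum_nonneg; intros; apply pow2_ge_0). rewrite Rmult_1_l; eapply Rle_trans; [apply H| right; apply rsum_ext; intros; simpl; ring].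
    intros b. exists (fun _ => 0). intros; lia. }
  destruct IHm as [[K [HK HB]] HN].
  destruct (HN (fun i => X i m)) as [w0 Hw0].
  set (rho := fun i => X i m - Am X m w0 i).
  assert (Orho : forall k, (k < m)%nat -> rsum n (fun i => X i k * rho i) = 0).
  { intros k Hk. transitivity (- rsum n (fun i => X i k * (Am X m w0 i - X i m))).
    replace (- rsum n (fun i => X i k * (Am X m w0 i - X i m))) with ((-1) * rsum n (fun i => X i k * (Am X m w0 i - X i m))) by ring.
    rewrite <- rsum_scal. apply rsum_ext; intros; unfold rho; ring.
    rewrite Hw0; auto; ring. }
  set (R0 := rsum n (fun i => rho i ^ 2)).
  assert (HR0 : 0 <= R0) by (apply rsum_nonneg; intros; apply pow2_ge_0).
  destruct (Req_dec R0 0) as [HR|HR].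
  - (* column in range *)
    assert (Hr : forall i, (i < n)%nat -> X i m = Am X m w0 i).
    { intros i Hi. pose proof (rsum_sq_zero n rho HR i Hi). unfold rho in H. lra. }
    split.
    + exists K. split; auto. intros z.
      destruct (HB (fun k => z k + z m * w0 k)) as [d0 [Hd1 Hd2]].
      exists (upd d0 m 0). split.
      * intros i Hi. rewrite Am_S_upd, Hd1 by auto. rewrite Am_add, Am_S, <- Hr by auto. ring.
      * rewrite rsum_S. rewrite (rsum_upd m d0 0 (fun x => x ^ 2)). unfold upd. destruct (Nat.eq_dec m m); [|lia].
        replace (rsum n (fun i => Am X (S m) z i ^ 2)) with (rsum n (fun i => Am X m (fun k => z k + z m * w0 k) i ^ 2)).
        replace (0 ^ 2) with 0 by ring. lra.
        apply rsum_ext; intros i Hi. rewrite Am_add, Am_S, <- Hr by auto. f_equal. ring.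
    + intros b. destruct (HN b) as [w1 Hw1]. exists (upd w1 m 0). intros k Hk.
      assert (E : forall i, Am X (S m) (upd w1 m 0) i = Am X m w1 i) by (intros; rewrite Am_S_upd; ring).
      destruct (Nat.eq_dec k m).
      * subst k. transitivity (rsum n (fun i => Am X m w0 i * (Am X m w1 i - b i))).
        apply rsum_ext; intros i Hi; rewrite E, Hr; auto.
        apply Am_orth. intros; apply Hw1; auto.
      * transitivity (rsum n (fun i => X i k * (Am X m w1 i - b i))); [apply rsum_ext; intros i Hi; rewrite E; auto | apply Hw1; lia].
  - assert (HRp : 0 < R0) by lra.
    assert (Oq : forall q, rsum n (fun i => Am X m q i * rho i) = 0) by (intros; apply Am_orth; auto).
    set (W0 := rsum m (fun k => w0 k ^ 2)).
    assert (HW0 : 0 <= W0) by (apply rsum_nonneg; intros; apply pow2_ge_0).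
    split.
    + exists (2 * K + (2 * W0 + 1) / R0). split.
      { assert (0 < (2 * W0 + 1) / R0) by (apply Rdiv_lt_0_compat; lra). lra. }
      intros z.
      set (z' := fun k => z k + z m * w0 k).
      assert (Ez : forall i, Am X (S m) z i = Am X m z' i + z m * rho i).
      { intros i. unfold z'. rewrite Am_add, Am_S. unfold rho; ring. }
      destruct (HB z') as [d0 [Hd1 Hd2]].
      exists (upd (fun k => d0 k - z m * w0 k) m (z m)). split.
      * intros i Hi. rewrite Am_S_upd, Ez. rewrite (Am_sub X m d0 w0 (z m) i). rewrite Hd1 by auto.
        unfold rho; ring.
      * rewrite rsum_S. rewrite (rsum_upd m _ (z m) (fun x => x ^ 2)). unfold upd. destruct (Nat.eq_dec m m); [|lia].
        assert (Hsum : rsum n (fun i => Am X (S m) z i ^ 2) = rsum n (fun i => Am X m z' i ^ 2) + z m ^ 2 * R0).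
        { rewrite (rsum_ext n _ (fun i => Am X m z' i ^ 2 + (z m * (2 * (Am X m z' i * rho i)) + z m ^ 2 * rho i ^ 2)))
            by (intros; rewrite Ez; ring).
          rewrite !rsum_plus, !rsum_scal, Oq. unfold R0. ring. }
        assert (Hle : rsum m (fun k => (d0 k - z m * w0 k) ^ 2) <= 2 * rsum m (fun k => d0 k ^ 2) + 2 * z m ^ 2 * W0).
        { unfold W0. rewrite <- rsum_scal, <- rsum_scal, <- rsum_plus. apply rsum_le; intros.
          pose proof (pow2_ge_0 (d0 k + z m * w0 k)). nra. }
        assert (0 <= rsum n (fun i => Am X m z' i ^ 2)) by (apply rsum_nonneg; intros; apply pow2_ge_0).
        rewrite Hsum.
        assert (((2 * W0 + 1) / R0) * (z m ^ 2 * R0) = (2 * W0 + 1) * z m ^ 2) by (field; lra).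
        assert (0 <= ((2 * W0 + 1) / R0) * rsum n (fun i => Am X m z' i ^ 2))
          by (apply Rmult_le_pos; auto; apply Rlt_le, Rdiv_lt_0_compat; lra).
        assert (0 <= 2 * K * (z m ^ 2 * R0)) by (apply Rmult_le_pos; [lra| apply Rmult_le_pos; [nra|lra]]).
        nra.
    + intros b. destruct (HN b) as [w1 Hw1].
      set (r1 := fun i => b i - Am X m w1 i).
      assert (Hr1 : forall k, (k < m)%nat -> rsum n (fun i => X i k * r1 i) = 0).
      { intros k Hk. transitivity ((-1) * rsum n (fun i => X i k * (Am X m w1 i - b i))).
        rewrite <- rsum_scal. apply rsum_ext; intros; unfold r1; ring. rewrite Hw1; auto; ring. }
      set (al := rsum n (fun i => r1 i * rho i) / R0).
      exists (upd (fun k => w1 k - al * w0 k) m al). intros k Hk.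
      assert (E : forall i, Am X (S m) (upd (fun k => w1 k - al * w0 k) m al) i - b i = - r1 i + al * rho i).
      { intros i. rewrite Am_S_upd. rewrite (Am_sub X m w1 w0 al i). unfold r1, rho. ring. }
      rewrite (rsum_ext n _ (fun i => X i k * (- r1 i + al * rho i))) by (intros; rewrite E; auto).
      destruct (Nat.eq_dec k m).
      * subst k. 
        rewrite (rsum_ext n _ (fun i => Am X m w0 i * (- r1 i + al * rho i) + (al * rho i ^ 2 - r1 i * rho i)))
          by (intros; unfold rho; ring).
        rewrite rsum_plus, Am_orth. rewrite rsum_minus, rsum_scal. fold R0. unfold al. field. lra.
        intros k' Hk'. rewrite (rsum_ext n _ (fun i => al * (X i k' * rho i) - X i k' * r1 i)) by (intros; ring).
        rewrite rsum_minus, rsum_scal, Orho, Hr1 by auto. ring.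
      * assert (k < m)%nat by lia.
        rewrite (rsum_ext n _ (fun i => al * (X i k * rho i) - X i k * r1 i)) by (intros; ring).
        rewrite rsum_minus, rsum_scal, Orho, Hr1 by auto. ring.
Qed.

Lemma gsum_eq n d X y th h :
  rsum d (fun k => h k * gradL n d X y th k) =
  - / INR n * rsum n (fun i => (y i - inner d (X i) th) * inner d (X i) h).
Proof. unfold gradL, inner.
  rewrite (rsum_ext d _ (fun k => - / INR n * (h k * rsum n (fun i => (y i - rsum d (fun k0 => X i k0 * th k0)) * X i k)))) by (intros; ring).
  rewrite rsum_scal. f_equal.
  rewrite (rsum_ext d _ (fun k => rsum n (fun i => (y i - rsum d (fun k0 => X i k0 * th k0)) * (X i k * h k)))).
  rewrite <- rsum_swap. apply rsum_ext; intros. rewrite <- rsum_scal. apply rsum_ext; intros; ring.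
  intros. rewrite <- rsum_scal. apply rsum_ext; intros; ring. Qed.

Lemma Loss_shift n d X y th h : (0 < n)%nat ->
  Loss n d X y (fun k => th k + h k) = Loss n d X y th + rsum d (fun k => h k * gradL n d X y th k)
    + / (2 * INR n) * rsum n (fun i => inner d (X i) h ^ 2).
Proof. intros Hn. rewrite gsum_eq. unfold Loss.
  assert (INR n <> 0) by (apply not_0_INR; lia).
  rewrite (rsum_ext n _ (fun i => (y i - inner d (X i) th) ^ 2 + ((-2) * ((y i - inner d (X i) th) * inner d (X i) h) + inner d (X i) h ^ 2))).
  rewrite !rsum_plus, rsum_scal. field; auto.
  intros i Hi. unfold inner. rewrite (rsum_ext d _ (fun k => X i k * th k + X i k * h k)) by (intros; ring).
  rewrite rsum_plus. ring. Qed.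

Definition G2 n d X y th := rsum d (fun k => gradL n d X y th k ^ 2).

Lemma PL n d X y : (0 < n)%nat -> exists C, 0 < C /\ forall th ph,
  Loss n d X y th - Loss n d X y ph <= C * G2 n d X y th.
Proof. intros Hn. destruct (LA X n d) as [[K [HK HB]] _].
  assert (Hn' : 0 < INR n) by (apply lt_0_INR; lia).
  exists (INR n * K / 2). split. apply Rmult_lt_0_compat; [apply Rmult_lt_0_compat|]; lra.
  intros th ph. set (h := fun k => ph k - th k).
  replace (Loss n d X y ph) with (Loss n d X y (fun k => th k + h k)).
  2: { f_equal. apply functional_extensionality; intros; unfold h; ring. }
  rewrite Loss_shift by auto.
  destruct (HB h) as [dl [Hd1 Hd2]].
  assert (E : rsum d (fun k => h k * gradL n d X y th k) = rsum d (fun k => dl k * gradL n d X y th k)).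
  { rewrite !gsum_eq. f_equal. apply rsum_ext; intros i Hi. unfold inner. fold (Am X d dl i) (Am X d h i). rewrite Hd1; auto. }
  rewrite E. set (S := rsum n (fun i => inner d (X i) h ^ 2)). fold S in Hd2.
  assert (Hy : - rsum d (fun k => dl k * gradL n d X y th k) <=
     rsum d (fun k => dl k ^ 2) / (2 * INR n * K) + INR n * K / 2 * G2 n d X y th).
  { unfold G2. unfold Rdiv. rewrite <- rsum_scalr, <- rsum_scal, <- rsum_plus.
    replace (- rsum d (fun k => dl k * gradL n d X y th k)) with ((-1) * rsum d (fun k => dl k * gradL n d X y th k)) by ring.
    rewrite <- rsum_scal. apply rsum_le; intros k Hk.
    set (a := dl k). set (b := gradL n d X y th k). set (c := INR n * K).
    assert (0 < c) by (apply Rmult_lt_0_compat; lra).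
    assert (0 <= (a / c + b) ^ 2 * c / 2).
    { apply Rmult_le_pos; [apply Rmult_le_pos; [apply pow2_ge_0|lra]|lra]. }
    replace (a ^ 2 * / (2 * INR n * K)) with (a ^ 2 / (2 * c)) by (unfold c; field; lra).
    replace ((a / c + b) ^ 2 * c / 2) with (a ^ 2 / (2 * c) + c / 2 * b ^ 2 + a * b) in H0 by (field; lra).
    clearbody a b c. revert H0. generalize (a ^ 2 / (2 * c)). intros A H0. unfold Rdiv in *. lra. }
  assert (rsum d (fun k => dl k ^ 2) / (2 * INR n * K) <= S / (2 * INR n)).
  { replace (S / (2 * INR n)) with (K * S / (2 * INR n * K)) by (field; lra).
    apply Rmult_le_compat_r. apply Rlt_le, Rinv_0_lt_compat. apply Rmult_lt_0_compat; lra. auto. }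
  assert (/ (2 * INR n) * S = S / (2 * INR n)) by (unfold Rdiv; ring).
  lra. Qed.

Lemma minimizer n d X y : (0 < n)%nat -> exists w, forall ph, Loss n d X y w <= Loss n d X y ph.
Proof. intros Hn. destruct (PL n d X y Hn) as [C [HC HPL]].
  destruct (LA X n d) as [_ HN]. destruct (HN y) as [w Hw]. exists w. intros ph.
  assert (G2 n d X y w = 0).
  { unfold G2. rewrite <- (rsum_zero d). apply rsum_ext; intros k Hk. unfold gradL.
    rewrite (rsum_ext n _ (fun i => (-1) * (X i k * (Am X d w i - y i)))) by (intros; unfold Am, inner; ring).
    rewrite rsum_scal, Hw; auto. ring. }
  specialize (HPL w ph). rewrite H in HPL. lra. Qed.

Definition betaX n d (X : nat -> nat -> R) := rsum n (fun i => rsum d (fun k => X i k ^ 2)).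

Lemma betaX_nonneg n d X : 0 <= betaX n d X.
Proof. apply rsum_nonneg; intros; apply rsum_nonneg; intros; apply pow2_ge_0. Qed.

Lemma G2_nonneg n d X y th : 0 <= G2 n d X y th.
Proof. apply rsum_nonneg; intros; apply pow2_ge_0. Qed.

Lemma descent n d X y Fs : (0 < n)%nat -> (forall ph, Fs <= Loss n d X y ph) ->
  forall th, INR n / (betaX n d X + 1) / 2 * G2 n d X y th <= Loss n d X y th - Fs.
Proof. intros Hn HF th.
  assert (Hn' : 0 < INR n) by (apply lt_0_INR; lia).
  pose proof (betaX_nonneg n d X) as Hb. pose proof (G2_nonneg n d X y th) as HG.
  remember (INR n / (betaX n d X + 1)) as eta eqn:Heq.
  assert (Heta : 0 < eta) by (rewrite Heq; apply Rdiv_lt_0_compat; lra).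
  set (h := fun k => - eta * gradL n d X y th k).
  specialize (HF (fun k => th k + h k)). rewrite Loss_shift in HF by auto.
  assert (E1 : rsum d (fun k => h k * gradL n d X y th k) = - eta * G2 n d X y th).
  { unfold G2. rewrite <- rsum_scal. apply rsum_ext; intros; unfold h; ring. }
  assert (E2 : rsum n (fun i => inner d (X i) h ^ 2) <= betaX n d X * (eta ^ 2 * G2 n d X y th)).
  { unfold betaX. rewrite <- rsum_scalr. apply rsum_le; intros i Hi.
    unfold inner. eapply Rle_trans. apply rsum_CS. apply Rmult_le_compat_l.
    apply rsum_nonneg; intros; apply pow2_ge_0. unfold G2. rewrite <- rsum_scal. right. apply rsum_ext; intros; unfold h; ring. }
  rewrite E1 in HF. clearbody h.
  assert (/ (2 * INR n) * rsum n (fun i => inner d (X i) h ^ 2) <= / (2 * INR n) * (betaX n d X * (eta ^ 2 * G2 n d X y th))).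
  { apply Rmult_le_compat_l; auto. apply Rlt_le, Rinv_0_lt_compat; lra. }
  assert (/ (2 * INR n) * (betaX n d X * (eta ^ 2 * G2 n d X y th)) <= eta / 2 * G2 n d X y th).
  { replace (/ (2 * INR n) * (betaX n d X * (eta ^ 2 * G2 n d X y th))) with ((betaX n d X / (betaX n d X + 1)) * (eta / 2 * G2 n d X y th))
      by (rewrite Heq; field; lra).
    rewrite <- (Rmult_1_l (eta / 2 * G2 n d X y th)) at 2. apply Rmult_le_compat_r.
    apply Rmult_le_pos; [apply Rlt_le, Rdiv_lt_0_compat; [exact Heta|lra]|auto]. apply (proj1 (Rdiv_le_1 (betaX n d X) (betaX n d X + 1) ltac:(lra))); lra. }
  lra. Qed.

Lemma dval (f : R -> R) (t a b : R) : is_derive f t a -> a = b -> is_derive f t b.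
Proof. intros H ->; auto. Qed.
Lemma dmul (f g : R -> R) (t a b : R) : is_derive f t a -> is_derive g t b -> is_derive (fun s => f s * g s) t (a * g t + f t * b).
Proof. intros. apply (is_derive_mult f g t a b); auto. intros; apply Rmult_comm. Qed.
Lemma dplus (f g : R -> R) (t a b : R) : is_derive f t a -> is_derive g t b -> is_derive (fun s => f s + g s) t (a + b).
Proof. intros. apply (is_derive_plus f g t a b); auto. Qed.
Lemma dminus (f g : R -> R) (t a b : R) : is_derive f t a -> is_derive g t b -> is_derive (fun s => f s - g s) t (a - b).
Proof. intros. apply (is_derive_minus f g t a b); auto. Qed.
Lemma dscal f t c a : is_derive f t a -> is_derive (fun s => c * f s) t (c * a).
Proof. intros. apply is_derive_scal; auto. Qed.
Lemma dconst (c t : R) : is_derive (fun _ => c) t 0.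
Proof. apply is_derive_Reals, derivable_pt_lim_const. Qed.
Lemma dsq (f : R -> R) (t a : R) : is_derive f t a -> is_derive (fun s => f s ^ 2) t (2 * a * f t).
Proof. intros H. eapply dval. apply (is_derive_pow f 2 t a H). simpl; ring. Qed.

Lemma inner_derive d (a : nat -> R) (F : R -> nat -> R) dF t :
  (forall k, (k < d)%nat -> is_derive (fun s => F s k) t (dF k)) ->
  is_derive (fun s => inner d a (F s)) t (inner d a dF).
Proof. intros H. unfold inner. apply (rsum_derive d (fun k s => a k * F s k) (fun k _ => a k * dF k)).
  intros; apply dscal; auto. Qed.

Definition gradd n d X (y : nat -> R) (dF : nat -> R) (j : nat) : R :=
  / INR n * rsum n (fun i => inner d (X i) dF * X i j).

Lemma gradL_derive n d X y (F : R -> nat -> R) dF t j :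
  (forall k, (k < d)%nat -> is_derive (fun s => F s k) t (dF k)) ->
  is_derive (fun s => gradL n d X y (F s) j) t (gradd n d X y dF j).
Proof. intros H. unfold gradL, gradd.
  eapply dval. apply dscal.
  apply (rsum_derive n (fun i s => (y i - inner d (X i) (F s)) * X i j) (fun i _ => (0 - inner d (X i) dF) * X i j)).
  intros i Hi. eapply dval. apply dmul. apply dminus. apply dconst. apply inner_derive; auto. apply dconst. simpl; ring.
  rewrite <- !rsum_scal. apply rsum_ext; intros; ring. Qed.

Lemma Loss_derive n d X y (F : R -> nat -> R) dF t : (0 < n)%nat ->
  (forall k, (k < d)%nat -> is_derive (fun s => F s k) t (dF k)) ->
  is_derive (fun s => Loss n d X y (F s)) t (rsum d (fun k => dF k * gradL n d X y (F t) k)).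
Proof. intros Hn H. unfold Loss. rewrite gsum_eq.
  assert (INR n <> 0) by (apply not_0_INR; lia).
  eapply dval. apply dscal.
  apply (rsum_derive n (fun i s => (y i - inner d (X i) (F s)) ^ 2) (fun i _ => 2 * (0 - inner d (X i) dF) * (y i - inner d (X i) (F t)))).
  intros i Hi. eapply dval. apply (dsq (fun s => y i - inner d (X i) (F s))). apply dminus. apply dconst. apply inner_derive; auto. simpl; ring.
  rewrite <- !rsum_scal. apply rsum_ext; intros. field. auto. Qed.

Lemma lim_eps (f : R -> R) l : (forall eps, 0 < eps -> exists M, forall x, M < x -> Rabs (f x - l) < eps) ->
  is_lim f p_infty l.
Proof. intros H. apply is_lim_spec. intros [e He]. simpl. destruct (H e He) as [M HM]. exists M; auto. Qed.

Lemma lim_eps_inv (f : R -> R) (l : R) : is_lim f p_infty l -> forall eps, 0 < eps -> exists M, forall x, M < x -> Rabs (f x - l) < eps.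
Proof. intros H eps He. apply is_lim_spec in H. destruct (H (mkposreal eps He)) as [M HM]. exists M; auto. Qed.

Lemma exp_small eps mu : 0 < eps -> 0 < mu -> exists M, forall x, M < x -> exp (- mu * x) < eps.
Proof. intros He Hmu. exists (- ln eps / mu). intros x Hx.
  rewrite <- (exp_ln eps He). apply exp_increasing.
  assert (mu * (- ln eps / mu) < mu * x) by (apply Rmult_lt_compat_l; auto).
  replace (mu * (- ln eps / mu)) with (- ln eps) in H by (field; lra). lra. Qed.

Lemma mono_lim (h : R -> R) B : (forall a b, 0 <= a -> a <= b -> h a <= h b) -> (forall t, 0 <= t -> h t <= B) ->
  exists l : R, is_lim h p_infty l.
Proof. intros Hm Hb.
  set (E := fun z => exists t, 0 <= t /\ z = h t).
  assert (bE : bound E) by (exists B; intros z [t [Ht ->]]; auto).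
  assert (nE : exists z, E z) by (exists (h 0); exists 0; split; [lra|auto]).
  destruct (completeness E bE nE) as [l [Hub Hlub]].
  exists l. apply lim_eps. intros eps He.
  assert (exists t0, 0 <= t0 /\ l - eps < h t0).
  { apply Classical_Prop.NNPP. intros Hn. assert (l <= l - eps).
    apply Hlub. intros z [t [Ht ->]]. destruct (Rle_lt_dec (h t) (l - eps)); auto.
    exfalso; apply Hn; exists t; auto. lra. }
  destruct H as [t0 [Ht0 Hl]]. exists t0. intros x Hx.
  assert (h t0 <= h x) by (apply Hm; lra). assert (h x <= l) by (apply Hub; exists x; split; [lra|auto]).
  apply Rabs_def1; lra. Qed.

Lemma dec_le (h dh : R -> R) a : (forall s, a <= s -> is_derive h s (dh s)) -> (forall s, a <= s -> dh s <= 0) ->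
  forall t, a <= t -> h t <= h a.
Proof. intros Hd Hn t Ht. destruct (Req_dec a t). subst; lra.
  destruct (MVT_cor2 h dh a t) as [c [Hc1 Hc2]]. lra.
  intros c Hc. apply is_derive_Reals. apply Hd; lra.
  assert (dh c * (t - a) <= 0). { assert (dh c <= 0) by (apply Hn; lra). assert (0 <= t - a) by lra.
  apply Rmult_le_0_r; auto. } lra. Qed.

Lemma RInt_plusR (f g : R -> R) a b : ex_RInt f a b -> ex_RInt g a b -> RInt (fun x => f x + g x) a b = RInt f a b + RInt g a b.
Proof. intros. exact (RInt_plus f g a b H H0). Qed.
Lemma RInt_minusR (f g : R -> R) a b : ex_RInt f a b -> ex_RInt g a b -> RInt (fun x => f x - g x) a b = RInt f a b - RInt g a b.
Proof. intros. exact (RInt_minus f g a b H H0). Qed.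
Lemma RInt_scalR (f : R -> R) a b c : ex_RInt f a b -> RInt (fun x => c * f x) a b = c * RInt f a b.
Proof. intros. exact (RInt_scal f a b c H). Qed.

Lemma cont_exp_aff a b x : continuous (fun s => exp (a * s + b)) x.
Proof. apply (ex_derive_continuous (fun s => exp (a * s + b))). auto_derive; auto. Qed.

Lemma RInt_exp_aff a b t : a <> 0 -> RInt (fun s => exp (a * s + b)) 0 t = (exp (a * t + b) - exp b) / a.
Proof. intros Ha. apply is_RInt_unique.
  replace ((exp (a * t + b) - exp b) / a) with (minus ((fun s => exp (a * s + b) / a) t) ((fun s => exp (a * s + b) / a) 0)).
  2: { unfold minus, plus, opp; simpl. replace (a * 0 + b) with b by ring. field; auto. }
  apply (is_RInt_derive (fun s => exp (a * s + b) / a) (fun s => exp (a * s + b))). intros x _. auto_derive; auto. field; auto.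
  intros x _. apply cont_exp_aff. Qed.


Lemma ex_RInt_cont0 (f : R -> R) t : 0 <= t -> (forall s, 0 <= s -> continuous f s) -> ex_RInt f 0 t.
Proof. intros Ht H. apply (ex_RInt_continuous (V := R_CompleteNormedModule) f). intros z Hz. rewrite Rmin_left in Hz by auto. apply H; lra. Qed.

Lemma RInt_bound (f B : R -> R) t : 0 <= t -> ex_RInt f 0 t -> ex_RInt B 0 t -> (forall s, 0 <= s -> Rabs (f s) <= B s) ->
  Rabs (RInt f 0 t) <= RInt B 0 t.
Proof. intros Ht Hf HB H. apply Rabs_le. split.
  rewrite <- (Ropp_involutive (RInt f 0 t)). apply Ropp_le_contravar.
  rewrite <- (Rmult_1_l (RInt f 0 t)). replace (- (1 * RInt f 0 t)) with ((-1) * RInt f 0 t) by ring.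
  rewrite <- RInt_scalR by auto. apply RInt_le; auto. apply (ex_RInt_scal f 0 t (-1)) in Hf. exact Hf.
  intros x Hx. specialize (H x ltac:(lra)). apply Rabs_le_between in H. lra.
  apply RInt_le; auto. intros x Hx. specialize (H x ltac:(lra)). apply Rabs_le_between in H. lra. Qed.

Lemma ex_RInt_cont (f : R -> R) a b : 0 <= a -> a <= b -> (forall s, 0 <= s -> continuous f s) -> ex_RInt f a b.
Proof. intros Ha Hb H. apply (ex_RInt_continuous (V := R_CompleteNormedModule) f). intros z Hz.
  rewrite Rmin_left in Hz by auto. apply H; lra. Qed.

Lemma cont_plus (f g : R -> R) x : continuous f x -> continuous g x -> continuous (fun s => f s + g s) x.
Proof. intros. exact (continuous_plus f g x H H0). Qed.
Lemma cont_mult (f g : R -> R) x : continuous f x -> continuous g x -> continuous (fun s => f s * g s) x.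
Proof. intros. exact (continuous_mult f g x H H0). Qed.
Lemma cont_scal (f : R -> R) c x : continuous f x -> continuous (fun s => c * f s) x.
Proof. intros. apply cont_mult; auto. apply continuous_const. Qed.

Lemma RInt_extR (f g : R -> R) a b : (forall x, f x = g x) -> RInt f a b = RInt g a b.
Proof. intros H. apply RInt_ext; intros; apply H. Qed.

Ltac conts := intros; repeat (first [apply cont_plus | apply cont_mult | apply cont_scal | apply cont_exp_aff | apply continuous_const | auto]).
Ltac exri := apply ex_RInt_cont; [lra|lra|conts].

Lemma tail (g : R -> R) K mu lam : 0 < lam -> 0 < mu -> mu < / lam ->
  (forall s, 0 <= s -> continuous g s) -> (forall s, 0 <= s -> Rabs (g s) <= K * exp (- mu * s)) ->
  (exists G : R, is_lim (fun t => RInt g 0 t) p_infty G) /\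
  is_lim (fun t => RInt (fun s => g s * exp (- (t - s) / lam)) 0 t) p_infty 0.
Proof. intros Hl Hmu Hml Hc Hb.
  assert (HK : 0 <= K). { specialize (Hb 0 (Rle_refl 0)). pose proof (Rabs_pos (g 0)). pose proof (exp_pos (- mu * 0)).
    destruct (Rle_lt_dec 0 K); auto. assert (K * exp (- mu * 0) < 0) by (apply Rmult_neg_pos; auto). lra. }
  set (e := fun s => exp (- mu * s + 0)).
  assert (He : forall s, e s = exp (- mu * s)) by (intros; unfold e; f_equal; ring).
  assert (Hce : forall s, continuous e s) by (intros; apply cont_exp_aff).
  assert (HIe : forall t, RInt e 0 t = (1 - exp (- mu * t)) / mu).
  { intros t. unfold e. rewrite RInt_exp_aff by lra. rewrite exp_0. replace (- mu * t + 0) with (- mu * t) by ring. change ((exp (- mu * t) - 1) / - mu = (1 - exp (- mu * t)) / mu). field. lra. }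
  set (f := fun s => g s + K * e s).
  assert (Hcf : forall s, 0 <= s -> continuous f s) by (intros; apply cont_plus; auto; apply cont_scal; auto).
  split.
  - set (h := fun t => RInt f 0 t).
    destruct (mono_lim h (2 * K / mu)) as [l Hlim].
    { intros a b Ha Hab. unfold h. rewrite <- (RInt_Chasles f 0 a b). 
      2: exri. 2: exri.
      assert (0 <= RInt f a b). { apply RInt_ge_0; auto. exri.
        intros x Hx. unfold f. rewrite He. specialize (Hb x ltac:(lra)). apply Rabs_le_between in Hb. lra. }
      change (plus (RInt f 0 a) (RInt f a b)) with (RInt f 0 a + RInt f a b). lra. }
    { intros t Ht. unfold h. apply Rle_trans with (RInt (fun s => (2 * K) * e s) 0 t).
      apply RInt_le; auto. exri. exri.
      intros x Hx. unfold f. rewrite He. specialize (Hb x ltac:(lra)). apply Rabs_le_between in Hb. lra.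
      rewrite RInt_scalR, HIe. 2: exri.
      pose proof (exp_pos (- mu * t)). apply Rle_trans with (2 * K * (1 / mu)). apply Rmult_le_compat_l. lra.
      unfold Rdiv; apply Rmult_le_compat_r; [apply Rlt_le, Rinv_0_lt_compat; lra| lra]. right; field; lra. }
    exists (l - K / mu). apply lim_eps. intros eps Heps.
    destruct (lim_eps_inv h l Hlim (eps / 2)) as [M1 HM1]. lra.
    destruct (exp_small (eps / 2 * mu / (K + 1)) mu) as [M2 HM2]. apply Rdiv_lt_0_compat; [apply Rmult_lt_0_compat|]; lra. auto.
    exists (Rmax 0 (Rmax M1 M2)). intros x Hx.
    assert (H0x : 0 <= x) by (eapply Rle_trans; [|apply Rlt_le, Hx]; apply Rmax_l).
    assert (HxM1 : M1 < x) by (eapply Rle_lt_trans; [|apply Hx]; eapply Rle_trans; [|apply Rmax_r]; apply Rmax_l).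
    assert (HxM2 : M2 < x) by (eapply Rle_lt_trans; [|apply Hx]; eapply Rle_trans; [|apply Rmax_r]; apply Rmax_r).
    assert (E : RInt g 0 x = h x - K * RInt e 0 x).
    { unfold h. rewrite <- RInt_scalR, <- RInt_minusR. apply RInt_extR; intros; unfold f; ring.
      all: exri. }
    rewrite E, HIe. specialize (HM1 x HxM1). specialize (HM2 x HxM2).
    pose proof (exp_pos (- mu * x)) as Hex.
    assert (K * exp (- mu * x) / mu < eps / 2).
    { apply Rmult_lt_compat_l with (r := (K + 1) / mu) in HM2. 2: apply Rdiv_lt_0_compat; lra.
      replace ((K + 1) / mu * (eps / 2 * mu / (K + 1))) with (eps / 2) in HM2 by (field; lra).
      eapply Rle_lt_trans; [|apply HM2]. replace (K * exp (- mu * x) / mu) with (K / mu * exp (- mu * x)) by (field; lra).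
      apply Rmult_le_compat_r. lra. unfold Rdiv; apply Rmult_le_compat_r; [apply Rlt_le, Rinv_0_lt_compat; lra|lra]. }
    replace (h x - K * ((1 - exp (- mu * x)) / mu) - (l - K / mu)) with ((h x - l) + K * exp (- mu * x) / mu) by (field; lra).
    assert (0 <= K * exp (- mu * x) / mu) by (apply Rmult_le_pos; [apply Rmult_le_pos; lra| apply Rlt_le, Rinv_0_lt_compat; lra]).
    eapply Rle_lt_trans. apply Rabs_triang. rewrite (Rabs_pos_eq (K * exp (- mu * x) / mu)) by auto. lra.
  - set (a := / lam - mu). assert (Ha : 0 < a) by (unfold a; lra).
    apply lim_eps. intros eps Heps.
    destruct (exp_small (eps * a / (K + 1)) mu) as [M2 HM2]. apply Rdiv_lt_0_compat; [apply Rmult_lt_0_compat|]; lra. auto.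
    exists (Rmax 0 M2). intros x Hx.
    assert (H0x : 0 <= x) by (eapply Rle_trans; [|apply Rlt_le, Hx]; apply Rmax_l).
    assert (HxM2 : M2 < x) by (eapply Rle_lt_trans; [|apply Hx]; apply Rmax_r).
    specialize (HM2 x HxM2). rewrite Rminus_0_r.
    eapply Rle_lt_trans. apply (RInt_bound _ (fun s => K * exp (a * s + - x / lam))); auto.
    apply ex_RInt_cont; [lra|lra|]. intros; apply cont_mult; auto.
    apply (continuous_ext (fun s => exp ((/ lam) * s + (- x / lam)))). intros; f_equal; field; lra. apply cont_exp_aff.
    exri.
    intros s Hs. rewrite Rabs_mult, (Rabs_pos_eq (exp _)) by (apply Rlt_le, exp_pos).
    apply Rle_trans with (K * exp (- mu * s) * exp (- (x - s) / lam)).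
    apply Rmult_le_compat_r. apply Rlt_le, exp_pos. auto.
    rewrite Rmult_assoc, <- exp_plus. right. f_equal. f_equal. unfold a. field. lra.
    rewrite RInt_scalR. 2: exri.
    rewrite RInt_exp_aff by lra.
    replace (a * x + - x / lam) with (- mu * x) by (unfold a; field; lra).
    pose proof (exp_pos (- x / lam)).
    apply Rmult_lt_compat_l with (r := (K + 1) / a) in HM2. 2: apply Rdiv_lt_0_compat; lra.
    replace ((K + 1) / a * (eps * a / (K + 1))) with eps in HM2 by (field; lra).
    eapply Rle_lt_trans; [|apply HM2].
    assert (0 <= exp (- mu * x)) by (apply Rlt_le, exp_pos).
    apply Rle_trans with (K * (exp (- mu * x) / a)).
    apply Rmult_le_compat_l; auto. unfold Rdiv. apply Rmult_le_compat_r. apply Rlt_le, Rinv_0_lt_compat; lra. lra.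
    replace (K * (exp (- mu * x) / a)) with (K / a * exp (- mu * x)) by (field; lra).
    apply Rmult_le_compat_r. lra. unfold Rdiv; apply Rmult_le_compat_r; [apply Rlt_le, Rinv_0_lt_compat; lra|lra].
Qed.

Definition thd (u v du dv : nat -> R -> R) t k := du k t * v k t + u k t * dv k t.
Definition thdd (u v du dv ddu ddv : nat -> R -> R) t k :=
  ddu k t * v k t + du k t * dv k t + (du k t * dv k t + u k t * ddv k t).
Definition gk n d X y (u v : nat -> R -> R) t k := gradL n d X y (theta_of u v t) k.
Definition Pf d (du dv : nat -> R -> R) t := rsum d (fun k => du k t ^ 2 + dv k t ^ 2).
Definition Zf n d X y u v du dv t := rsum d (fun k => thd u v du dv t k * gk n d X y u v t k).
Definition Nf n d X y (u v : nat -> R -> R) t := rsum d (fun k => gk n d X y u v t k ^ 2 * (u k t ^ 2 + v k t ^ 2)).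


Lemma theta_derive d (u v du dv ddu ddv : nat -> R -> R) t :
  (forall k, (k < d)%nat -> is_derive (u k) t (du k t) /\ is_derive (v k) t (dv k t) /\
     is_derive (du k) t (ddu k t) /\ is_derive (dv k) t (ddv k t)) ->
  forall k, (k < d)%nat -> is_derive (fun s => theta_of u v s k) t (thd u v du dv t k).
Proof. intros H k Hk. destruct (H k Hk) as [H1 [H2 _]]. unfold theta_of, thd. apply dmul; auto. Qed.

Lemma thd_derive d (u v du dv ddu ddv : nat -> R -> R) t :
  (forall k, (k < d)%nat -> is_derive (u k) t (du k t) /\ is_derive (v k) t (dv k t) /\
     is_derive (du k) t (ddu k t) /\ is_derive (dv k) t (ddv k t)) ->
  forall k, (k < d)%nat -> is_derive (fun s => thd u v du dv s k) t (thdd u v du dv ddu ddv t k).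
Proof. intros H k Hk. destruct (H k Hk) as [H1 [H2 [H3 H4]]]. unfold thd, thdd. apply dplus; apply dmul; auto. Qed.

Lemma Loss_th_derive n d X y (u v du dv ddu ddv : nat -> R -> R) t : (0 < n)%nat ->
  (forall k, (k < d)%nat -> is_derive (u k) t (du k t) /\ is_derive (v k) t (dv k t) /\
     is_derive (du k) t (ddu k t) /\ is_derive (dv k) t (ddv k t)) ->
  is_derive (fun s => Loss n d X y (theta_of u v s)) t (Zf n d X y u v du dv t).
Proof. intros Hn H. apply (Loss_derive n d X y (theta_of u v) (thd u v du dv t) t Hn).
  apply (theta_derive d u v du dv ddu ddv t H). Qed.

Lemma gk_derive n d X y (u v du dv ddu ddv : nat -> R -> R) t k :
  (forall k, (k < d)%nat -> is_derive (u k) t (du k t) /\ is_derive (v k) t (dv k t) /\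
     is_derive (du k) t (ddu k t) /\ is_derive (dv k) t (ddv k t)) ->
  is_derive (fun s => gk n d X y u v s k) t (gradd n d X y (thd u v du dv t) k).
Proof. intros H. apply (gradL_derive n d X y (theta_of u v) (thd u v du dv t) t k).
  apply (theta_derive d u v du dv ddu ddv t H). Qed.

Lemma P_derive d (u v du dv ddu ddv : nat -> R -> R) t :
  (forall k, (k < d)%nat -> is_derive (u k) t (du k t) /\ is_derive (v k) t (dv k t) /\
     is_derive (du k) t (ddu k t) /\ is_derive (dv k) t (ddv k t)) ->
  is_derive (fun s => Pf d du dv s) t (rsum d (fun k => 2 * ddu k t * du k t + 2 * ddv k t * dv k t)).
Proof. intros H. unfold Pf. apply (rsum_derive d (fun k s => du k s ^ 2 + dv k s ^ 2) (fun k t => 2 * ddu k t * du k t + 2 * ddv k t * dv k t)).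
  intros k Hk. destruct (H k Hk) as [_ [_ [H3 H4]]]. apply dplus; apply dsq; auto. Qed.

Lemma Z_derive n d X y (u v du dv ddu ddv : nat -> R -> R) t :
  (forall k, (k < d)%nat -> is_derive (u k) t (du k t) /\ is_derive (v k) t (dv k t) /\
     is_derive (du k) t (ddu k t) /\ is_derive (dv k) t (ddv k t)) ->
  is_derive (fun s => Zf n d X y u v du dv s) t
    (rsum d (fun k => thdd u v du dv ddu ddv t k * gk n d X y u v t k + thd u v du dv t k * gradd n d X y (thd u v du dv t) k)).
Proof. intros H. unfold Zf.
  apply (rsum_derive d (fun k s => thd u v du dv s k * gk n d X y u v s k)
    (fun k t => thdd u v du dv ddu ddv t k * gk n d X y u v t k + thd u v du dv t k * gradd n d X y (thd u v du dv t) k)).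
  intros k Hk. apply dmul. apply (thd_derive d u v du dv ddu ddv t H k Hk). apply (gk_derive n d X y u v du dv ddu ddv t k H). Qed.

Lemma grad_quad n d X y h : rsum d (fun k => h k * gradd n d X y h k) = / INR n * rsum n (fun i => inner d (X i) h ^ 2).
Proof. unfold gradd. rewrite (rsum_ext d _ (fun k => / INR n * rsum n (fun i => inner d (X i) h * (X i k * h k)))).
  rewrite rsum_scal, rsum_swap. f_equal. apply rsum_ext; intros. rewrite rsum_scal. fold (inner d (X k) h). ring.
  intros. rewrite <- !rsum_scal. apply rsum_ext; intros; ring. Qed.

Lemma inner_sq_bound n d X h : rsum n (fun i => inner d (X i) h ^ 2) <= betaX n d X * rsum d (fun k => h k ^ 2).
Proof. unfold betaX. rewrite <- rsum_scalr. apply rsum_le; intros. unfold inner. apply rsum_CS. Qed.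

Lemma delta_lb d (f : nat -> R -> R) :
  (forall k t, 0 <= f k t) ->
  (forall k, (k < d)%nat -> exists D : R, is_lim (f k) p_infty D /\ D <> 0) ->
  exists T c, 0 <= T /\ 0 < c /\ forall k t, (k < d)%nat -> T <= t -> c <= f k t.
Proof. intros Hpos. induction d; intros H.
  - exists 0, 1. split; [lra|split; [lra|]]. intros; lia.
  - destruct IHd as [T [c [HT [Hc HH]]]]. intros; apply H; lia.
    destruct (H d (Nat.lt_succ_diag_r d)) as [D [HL HD]].
    assert (HDp : 0 < D).
    { destruct (Rlt_le_dec 0 D); auto. exfalso.
      destruct (lim_eps_inv (f d) D HL (- D + 1)) as [M HM]. lra.
      destruct (lim_eps_inv (f d) D HL 1) as [M' HM']. lra.
      assert (D < 0) by lra.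
      destruct (lim_eps_inv (f d) D HL (- D)) as [M2 HM2]. lra.
      specialize (HM2 (Rabs M2 + 1) ltac:(pose proof (Rle_abs M2); lra)).
      specialize (Hpos d (Rabs M2 + 1)). apply Rabs_def2 in HM2. lra. }
    destruct (lim_eps_inv (f d) D HL (D / 2)) as [M HM]. lra.
    exists (Rmax T (Rabs M + 1)), (Rmin c (D / 2)). split.
    eapply Rle_trans; [apply HT|apply Rmax_l]. split. apply Rmin_pos; lra.
    intros k t Hk Ht. assert (T <= t) by (eapply Rle_trans; [apply Rmax_l|apply Ht]).
    assert (M < t) by (pose proof (Rle_abs M); pose proof (Rmax_r T (Rabs M + 1)); lra).
    destruct (Nat.eq_dec k d).
    + subst k. specialize (HM t H1). apply Rabs_def2 in HM. pose proof (Rmin_r c (D / 2)). lra.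
    + pose proof (HH k t ltac:(lia) H0). pose proof (Rmin_l c (D / 2)). lra.
Qed.

Lemma energy (lam : R) (P Z ell Pd : R -> R) :
  (forall s, 0 <= s -> is_derive ell s (Z s)) ->
  (forall s, 0 <= s -> is_derive P s (Pd s)) ->
  (forall s, 0 <= s -> lam * Pd s = - 2 * P s - 2 * Z s) ->
  (forall s, 0 <= s -> 0 <= P s) ->
  forall t, 0 <= t -> lam / 2 * P t + ell t <= lam / 2 * P 0 + ell 0.
Proof. intros H1 H2 H3 H4 t Ht.
  apply (dec_le (fun s => lam / 2 * P s + ell s) (fun s => - P s) 0); auto.
  intros s Hs. eapply dval. apply dplus. apply dscal. apply H2; auto. apply H1; auto.
  replace (lam / 2 * Pd s) with ((lam * Pd s) / 2) by (field). rewrite H3 by auto. field.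
  intros s Hs. specialize (H4 s Hs). lra. Qed.

Lemma dexp_lin k s : is_derive (fun s => exp (k * s)) s (k * exp (k * s)).
Proof. auto_derive; auto. ring. Qed.

Lemma lyap (lam c1 c2 Cpl cD Gs T : R) (P Z N ell gj Pd Zd : R -> R) :
  0 < lam -> 0 <= c1 -> 0 < c2 -> 0 < Cpl -> 0 < cD -> 0 <= T ->
  (forall s, 0 <= s -> is_derive ell s (Z s)) ->
  (forall s, 0 <= s -> is_derive P s (Pd s)) ->
  (forall s, 0 <= s -> lam * Pd s = - 2 * P s - 2 * Z s) ->
  (forall s, 0 <= s -> is_derive Z s (Zd s)) ->
  (forall s, 0 <= s -> lam * Zd s <= - Z s - N s + lam * c1 * P s) ->
  (forall s, 0 <= s -> 0 <= P s) ->
  (forall s, 0 <= s -> 0 <= N s) ->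
  (forall s, 0 <= s -> Rabs (Z s) <= (P s + N s) / 2) ->
  (forall s, 0 <= s -> c2 * N s <= ell s) ->
  (forall s, T <= s -> ell s <= Cpl * N s) ->
  (forall s, T <= s -> cD * gj s ^ 2 <= N s) ->
  (forall s, 0 <= s -> gj s ^ 2 <= Gs) ->
  exists B kap, 0 < kap /\ forall s, 0 <= s -> gj s ^ 2 <= B * exp (- kap * s).
Proof.
  intros Hl Hc1 Hc2 HC HcD HT Hell HP HPd HZ HZd HPp HNp HZb Hlow Hup Hg HGs.
  set (eps := Rmin (Rmin (lam / 2) c2) (lam / (1 + 2 * lam * c1))).
  assert (He1 : eps <= lam / 2) by (unfold eps; eapply Rle_trans; [apply Rmin_l|apply Rmin_l]).
  assert (He2 : eps <= c2) by (unfold eps; eapply Rle_trans; [apply Rmin_l|apply Rmin_r]).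
  assert (He3 : eps <= lam / (1 + 2 * lam * c1)) by (unfold eps; apply Rmin_r).
  assert (Hep : 0 < eps).
  { unfold eps. apply Rmin_pos. apply Rmin_pos; lra. apply Rdiv_lt_0_compat; [lra|]. 
    assert (0 <= lam * c1) by (apply Rmult_le_pos; lra). lra. }
  clearbody eps.
  assert (He3' : eps * (1 + 2 * lam * c1) <= lam).
  { assert (0 < 1 + 2 * lam * c1) by (assert (0 <= lam * c1) by (apply Rmult_le_pos; lra); lra).
    apply Rmult_le_compat_r with (r := 1 + 2 * lam * c1) in He3; [|lra].
    replace (lam / (1 + 2 * lam * c1) * (1 + 2 * lam * c1)) with lam in He3 by (field; lra). lra. }
  set (V := fun s => lam / 2 * P s + ell s + eps * Z s).
  set (Vd := fun s => - P s + eps * Zd s).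
  assert (HV : forall s, 0 <= s -> is_derive V s (Vd s)).
  { intros s Hs. unfold V, Vd. eapply dval. apply dplus. apply dplus. apply dscal. apply HP; auto. apply Hell; auto.
    apply dscal. apply HZ; auto.
    replace (lam / 2 * Pd s) with ((lam * Pd s) / 2) by field. rewrite HPd by auto. field. }
  assert (HVd : forall s, 0 <= s -> lam * Vd s <= - (lam / 2) * P s - (eps / 2) * N s).
  { intros s Hs. unfold Vd. specialize (HZd s Hs). specialize (HZb s Hs). apply Rabs_le_between in HZb.
    specialize (HPp s Hs). specialize (HNp s Hs).
    assert (eps * (lam * Zd s) <= eps * (- Z s - N s + lam * c1 * P s)) by (apply Rmult_le_compat_l; lra).
    assert (eps * (- Z s) <= eps * ((P s + N s) / 2)) by (apply Rmult_le_compat_l; lra).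
    assert (eps * (1 + 2 * lam * c1) * P s <= lam * P s) by (apply Rmult_le_compat_r; lra).
    replace (lam * (- P s + eps * Zd s)) with (- lam * P s + eps * (lam * Zd s)) by ring.
    replace (eps * (- Z s - N s + lam * c1 * P s)) with (eps * (- Z s) - eps * N s + eps * lam * c1 * P s) in H by ring.
    replace (eps * (1 + 2 * lam * c1) * P s) with (eps * P s + 2 * (eps * lam * c1 * P s)) in H1 by ring.
    replace (eps * ((P s + N s) / 2)) with (eps * P s / 2 + eps * N s / 2) in H0 by field.
    lra. }
  assert (HVlow : forall s, 0 <= s -> (c2 / 2) * N s <= V s).
  { intros s Hs. unfold V. specialize (HZb s Hs). apply Rabs_le_between in HZb.
    specialize (HPp s Hs). specialize (HNp s Hs). specialize (Hlow s Hs).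
    assert (eps * (- Z s) <= eps * ((P s + N s) / 2)) by (apply Rmult_le_compat_l; lra).
    assert (eps * P s <= lam / 2 * P s) by (apply Rmult_le_compat_r; lra).
    assert (eps * N s <= c2 * N s) by (apply Rmult_le_compat_r; lra).
    replace (eps * ((P s + N s) / 2)) with (eps * P s / 2 + eps * N s / 2) in H by field.
    assert (0 <= lam / 2 * P s) by (apply Rmult_le_pos; lra).
    lra. }
  set (CV := lam + Cpl + eps).
  assert (HCV : 0 < CV) by (unfold CV; lra).
  assert (HVup : forall s, T <= s -> V s <= CV * (P s + N s)).
  { intros s Hs. assert (0 <= s) by lra. unfold V, CV. specialize (HZb s H). apply Rabs_le_between in HZb.
    specialize (HPp s H). specialize (HNp s H). specialize (Hup s Hs).
    assert (eps * Z s <= eps * ((P s + N s) / 2)) by (apply Rmult_le_compat_l; lra).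
    assert (lam / 2 * P s <= lam * P s) by (apply Rmult_le_compat_r; lra).
    assert (0 <= lam * N s) by (apply Rmult_le_pos; lra).
    assert (0 <= Cpl * P s) by (apply Rmult_le_pos; lra).
    assert (0 <= eps * P s) by (apply Rmult_le_pos; lra).
    assert (0 <= eps * N s) by (apply Rmult_le_pos; lra).
    replace (eps * ((P s + N s) / 2)) with (eps * P s / 2 + eps * N s / 2) in H0 by field.
    replace ((lam + Cpl + eps) * (P s + N s)) with (lam * P s + lam * N s + Cpl * P s + Cpl * N s + eps * P s + eps * N s) by ring.
    lra. }
  set (m := Rmin (lam / 2) (eps / 2)).
  assert (Hm : 0 < m) by (unfold m; apply Rmin_pos; lra).
  set (kap := m / (lam * CV)).
  assert (Hkap : 0 < kap) by (unfold kap; apply Rdiv_lt_0_compat; [lra|apply Rmult_lt_0_compat; lra]).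
  assert (HVdec : forall s, T <= s -> Vd s <= - kap * V s).
  { intros s Hs. assert (0 <= s) by lra. specialize (HVd s H). specialize (HVup s Hs).
    specialize (HPp s H). specialize (HNp s H).
    assert (m * P s <= lam / 2 * P s) by (apply Rmult_le_compat_r; [lra|unfold m; apply Rmin_l]).
    assert (m * N s <= eps / 2 * N s) by (apply Rmult_le_compat_r; [lra|unfold m; apply Rmin_r]).
    assert (lam * Vd s <= - m * (P s + N s)) by lra.
    assert (kap * V s <= kap * (CV * (P s + N s))) by (apply Rmult_le_compat_l; lra).
    replace (kap * (CV * (P s + N s))) with (m * (P s + N s) / lam) in H3 by (unfold kap; field; lra).
    assert (Vd s <= - m * (P s + N s) / lam).
    { apply Rmult_le_reg_l with lam; auto. replace (lam * (- m * (P s + N s) / lam)) with (- m * (P s + N s)) by (field; lra). auto. }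
    replace (- m * (P s + N s) / lam) with (- (m * (P s + N s) / lam)) in H4 by (field; lra). lra. }
  clearbody kap m CV.
  set (W := fun s => exp (kap * s) * V s).
  assert (HW : forall s, T <= s -> W s <= W T).
  { apply (dec_le W (fun s => kap * exp (kap * s) * V s + exp (kap * s) * Vd s) T).
    intros s Hs. unfold W. eapply dval; [apply (dmul (fun s => exp (kap * s)) V); [apply dexp_lin | apply HV; lra] | ring].
    intros s Hs. specialize (HVdec s Hs). pose proof (exp_pos (kap * s)).
    replace (kap * exp (kap * s) * V s + exp (kap * s) * Vd s) with (exp (kap * s) * (Vd s + kap * V s)) by ring.
    assert (Vd s + kap * V s <= 0) by nra. nra. }
  clearbody V Vd.
  exists ((Rabs Gs + 2 * Rabs (V T) / (c2 * cD)) * exp (kap * T)), kap. split; auto.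
  intros s Hs. pose proof (exp_pos (kap * T)). pose proof (exp_pos (- kap * s)).
  assert (Hinv : exp (kap * T) * exp (- kap * s) = exp (kap * (T - s))) by (rewrite <- exp_plus; f_equal; ring).
  assert (0 <= 2 * Rabs (V T) / (c2 * cD)).
  { apply Rmult_le_pos. pose proof (Rabs_pos (V T)); lra. apply Rlt_le, Rinv_0_lt_compat, Rmult_lt_0_compat; lra. }
  pose proof (Rabs_pos Gs).
  destruct (Rle_lt_dec T s) as [HTs|HTs].
  - specialize (HW s HTs). unfold W in HW. specialize (Hg s HTs). specialize (HVlow s Hs).
    pose proof (exp_pos (kap * s)).
    assert (Vs : V s <= exp (kap * (T - s)) * V T).
    { apply Rmult_le_reg_l with (exp (kap * s)); auto.
      replace (exp (kap * s) * (exp (kap * (T - s)) * V T)) with (exp (kap * T) * V T); auto.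
      rewrite <- Rmult_assoc, <- exp_plus. f_equal. f_equal. ring. }
    assert (gj s ^ 2 <= 2 / (c2 * cD) * V s).
    { apply Rmult_le_reg_l with (c2 * cD / 2). apply Rmult_lt_0_compat; [apply Rmult_lt_0_compat|]; lra.
      replace (c2 * cD / 2 * (2 / (c2 * cD) * V s)) with (V s) by (field; lra).
      replace (c2 * cD / 2 * gj s ^ 2) with (c2 / 2 * (cD * gj s ^ 2)) by (field; lra).
      apply Rle_trans with (c2 / 2 * N s); auto. apply Rmult_le_compat_l; lra. }
    eapply Rle_trans. apply H4.
    rewrite Rmult_assoc, Hinv.
    assert (0 < exp (kap * (T - s))) by apply exp_pos.
    apply Rle_trans with (2 / (c2 * cD) * (exp (kap * (T - s)) * V T)).
    apply Rmult_le_compat_l; auto. apply Rlt_le, Rdiv_lt_0_compat; [lra|apply Rmult_lt_0_compat; lra].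
    apply Rle_trans with (2 * Rabs (V T) / (c2 * cD) * exp (kap * (T - s))).
    replace (2 / (c2 * cD) * (exp (kap * (T - s)) * V T)) with (2 * V T / (c2 * cD) * exp (kap * (T - s))) by (field; lra).
    apply Rmult_le_compat_r. lra. unfold Rdiv. apply Rmult_le_compat_r. apply Rlt_le, Rinv_0_lt_compat, Rmult_lt_0_compat; lra.
    pose proof (Rle_abs (V T)); lra.
    apply Rmult_le_compat_r; lra.
  - specialize (HGs s Hs). rewrite Rmult_assoc, Hinv.
    assert (1 <= exp (kap * (T - s))).
    { pose proof (exp_ineq1_le (kap * (T - s))). assert (0 <= kap * (T - s)) by (apply Rmult_le_pos; lra). lra. }
    apply Rle_trans with (Rabs Gs * 1). pose proof (Rle_abs Gs). lra.
    apply Rmult_le_compat; lra.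
Qed.

Lemma sq_to_abs (g : R -> R) B kap lam : 0 < kap -> 0 < lam ->
  (forall s, 0 <= s -> g s ^ 2 <= B * exp (- kap * s)) ->
  exists K mu, 0 < mu /\ mu < / lam /\ forall s, 0 <= s -> Rabs (g s) <= K * exp (- mu * s).
Proof. intros Hk Hl H.
  assert (HB : 0 <= B). { specialize (H 0 (Rle_refl 0)). rewrite Rmult_0_r, exp_0, Rmult_1_r in H.
    pose proof (pow2_ge_0 (g 0)). lra. }
  exists (sqrt B), (Rmin (kap / 2) (/ (2 * lam))). split. apply Rmin_pos. lra. apply Rinv_0_lt_compat; lra.
  split. eapply Rle_lt_trans. apply Rmin_r. apply Rinv_lt_contravar. nra. lra.
  intros s Hs. specialize (H s Hs).
  assert (E : sqrt (B * exp (- kap * s)) = sqrt B * exp (- kap / 2 * s)).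
  { rewrite sqrt_mult; auto. f_equal. replace (exp (- kap * s)) with (exp (- kap / 2 * s) ^ 2).
    apply sqrt_pow2. apply Rlt_le, exp_pos. simpl. rewrite Rmult_1_r, <- exp_plus. f_equal. field.
    apply Rlt_le, exp_pos. }
  apply Rle_trans with (sqrt B * exp (- kap / 2 * s)).
  rewrite <- E. rewrite <- (sqrt_pow2 (Rabs (g s))) by apply Rabs_pos. apply sqrt_le_1. apply pow2_ge_0.
  apply Rmult_le_pos; auto. apply Rlt_le, exp_pos. rewrite <- Rsqr_pow2, <- Rsqr_abs, Rsqr_pow2. auto.
  apply Rmult_le_compat_l. apply sqrt_pos.
  assert (Rmin (kap / 2) (/ (2 * lam)) <= kap / 2) by apply Rmin_l.
  assert (Rmin (kap / 2) (/ (2 * lam)) * s <= kap / 2 * s) by (apply Rmult_le_compat_r; lra).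
  assert (Hle : - kap / 2 * s <= - Rmin (kap / 2) (/ (2 * lam)) * s) by (unfold Rdiv in *; lra).
  destruct (Rle_lt_or_eq_dec _ _ Hle) as [Hlt|Heq]. apply Rlt_le, exp_increasing; auto. rewrite Heq; lra.
Qed.

Lemma L1 a b c e : Rabs (a * b + c * e) <= (a ^ 2 + b ^ 2 + c ^ 2 + e ^ 2) / 2.
Proof. apply Rabs_le. split.
  - pose proof (pow2_ge_0 (a + b)). pose proof (pow2_ge_0 (c + e)). nra.
  - pose proof (pow2_ge_0 (a - b)). pose proof (pow2_ge_0 (c - e)). nra. Qed.

Lemma L2 x : Rabs x <= (x ^ 2 + 1) / 2.
Proof. destruct (Rcase_abs x). rewrite Rabs_left by auto. pose proof (pow2_ge_0 (x + 1)). nra.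
  rewrite Rabs_right by auto. pose proof (pow2_ge_0 (x - 1)). nra. Qed.

Lemma L3 a b c e : (a * b + c * e) ^ 2 <= 2 * (a ^ 2 * b ^ 2 + c ^ 2 * e ^ 2).
Proof. pose proof (pow2_ge_0 (a * b - c * e)). nra. Qed.

Lemma sq_le_M x M : Rabs x <= M -> x ^ 2 <= M ^ 2.
Proof. intros H. pose proof (Rabs_pos x). replace (x ^ 2) with (Rabs x ^ 2).
  apply pow_incr; lra. rewrite <- !Rsqr_pow2. symmetry. apply Rsqr_abs. Qed.

Lemma L4 g G a b : Rabs g <= G -> 2 * g * a * b <= G * (a ^ 2 + b ^ 2).
Proof. intros H. apply Rle_trans with (Rabs (2 * g * a * b)). apply Rle_abs.
  replace (2 * g * a * b) with (g * (2 * a * b)) by ring. rewrite Rabs_mult.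
  assert (Rabs (2 * a * b) <= a ^ 2 + b ^ 2).
  { apply Rabs_le. pose proof (pow2_ge_0 (a + b)). pose proof (pow2_ge_0 (a - b)). split; nra. }
  apply Rmult_le_compat; auto; apply Rabs_pos. Qed.

Theorem lemma3 (n d : nat) (X : nat -> nat -> R) (y : nat -> R) (lam : R)
  (u v du dv ddu ddv : nat -> R -> R) :
  (0 < n)%nat ->
  0 < lam ->
  (forall j t, (j < d)%nat -> 0 <= t ->
     is_derive (u j) t (du j t) /\ is_derive (v j) t (dv j t) /\
     is_derive (du j) t (ddu j t) /\ is_derive (dv j) t (ddv j t)) ->
  (forall j t, (j < d)%nat -> 0 <= t ->
     lam * ddu j t + du j t + gradL n d X y (theta_of u v t) j * v j t = 0 /\
     lam * ddv j t + dv j t + gradL n d X y (theta_of u v t) j * u j t = 0) ->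
  (forall j, (j < d)%nat -> du j 0 = 0 /\ dv j 0 = 0) ->
  (forall j, (j < d)%nat -> Rabs (u j 0 ^ 2 - v j 0 ^ 2) <> 0) ->
  (exists M, forall j t, (j < d)%nat -> 0 <= t -> Rabs (u j t) <= M /\ Rabs (v j t) <= M) ->
  (forall j, (j < d)%nat -> exists Dinf : R,
     is_lim (fun t => Rabs (u j t ^ 2 - v j t ^ 2)) p_infty Dinf /\ Dinf <> 0) ->
  forall j, (j < d)%nat ->
    (exists G : R,
       is_lim (fun t => RInt (fun s => gradL n d X y (theta_of u v s) j) 0 t) p_infty G)
    /\
    is_lim (fun t => RInt (fun s => gradL n d X y (theta_of u v s) j * exp (- (t - s) / lam)) 0 t)
      p_infty 0.
Proof.
  intros Hn Hlam Hder Hode H0 Hnz [M HM] HD j Hj.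
  assert (Hder' : forall t, 0 <= t -> forall k, (k < d)%nat -> is_derive (u k) t (du k t) /\ is_derive (v k) t (dv k t) /\
     is_derive (du k) t (ddu k t) /\ is_derive (dv k) t (ddv k t)) by (intros; apply Hder; auto).
  assert (Hn' : 0 < INR n) by (apply lt_0_INR; lia).
  destruct (minimizer n d X y Hn) as [w Hw].
  destruct (PL n d X y Hn) as [Cpl [HCpl HPL]].
  pose proof (descent n d X y (Loss n d X y w) Hn Hw) as Hdesc.
  remember (INR n / (betaX n d X + 1) / 2) as eta eqn:Heta.
  assert (Hetap : 0 < eta) by (rewrite Heta; pose proof (betaX_nonneg n d X); apply Rdiv_lt_0_compat; [apply Rdiv_lt_0_compat|]; lra).
  destruct (delta_lb d (fun k t => Rabs (u k t ^ 2 - v k t ^ 2))) as [T [cD [HT [HcD HDl]]]].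
  { intros; apply Rabs_pos. } { exact HD. }
  remember (M ^ 2) as M2 eqn:HM2.
  assert (HM2p : 0 <= M2) by (rewrite HM2; apply pow2_ge_0).
  assert (Hu2 : forall k t, (k < d)%nat -> 0 <= t -> u k t ^ 2 <= M2) by (intros; rewrite HM2; apply sq_le_M, HM; auto).
  assert (Hv2 : forall k t, (k < d)%nat -> 0 <= t -> v k t ^ 2 <= M2) by (intros; rewrite HM2; apply sq_le_M, HM; auto).
  pose (P := fun s => Pf d du dv s).
  pose (Z := fun s => Zf n d X y u v du dv s).
  pose (N := fun s => Nf n d X y u v s).
  pose (ell := fun s => Loss n d X y (theta_of u v s) - Loss n d X y w).
  pose (Pd := fun s => rsum d (fun k => 2 * ddu k s * du k s + 2 * ddv k s * dv k s)).
  pose (Zd := fun s => rsum d (fun k => thdd u v du dv ddu ddv s k * gk n d X y u v s k + thd u v du dv s k * gradd n d X y (thd u v du dv s) k)).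
  pose (gj := fun s => gk n d X y u v s j).
  pose (G2s := fun s => G2 n d X y (theta_of u v s)).
  assert (Hell : forall s, 0 <= s -> is_derive ell s (Z s)).
  { intros s Hs. unfold ell, Z. eapply dval. apply dminus. apply (Loss_th_derive n d X y u v du dv ddu ddv s Hn (Hder' s Hs)).
    apply dconst. ring. }
  assert (HP : forall s, 0 <= s -> is_derive P s (Pd s)) by (intros s Hs; apply (P_derive d u v du dv ddu ddv s (Hder' s Hs))).
  assert (HZ : forall s, 0 <= s -> is_derive Z s (Zd s)) by (intros s Hs; apply (Z_derive n d X y u v du dv ddu ddv s (Hder' s Hs))).
  assert (HPd : forall s, 0 <= s -> lam * Pd s = - 2 * P s - 2 * Z s).
  { intros s Hs. unfold Pd, P, Z, Pf, Zf. rewrite <- rsum_scal.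
    replace (- 2 * rsum d (fun k => du k s ^ 2 + dv k s ^ 2) - 2 * rsum d (fun k => thd u v du dv s k * gk n d X y u v s k))
      with (rsum d (fun k => - 2 * (du k s ^ 2 + dv k s ^ 2) - 2 * (thd u v du dv s k * gk n d X y u v s k)))
      by (rewrite rsum_minus, !rsum_scal; ring).
    apply rsum_ext; intros k Hk. destruct (Hode k s Hk Hs) as [E1 E2]. unfold thd, gk.
    replace (lam * (2 * ddu k s * du k s + 2 * ddv k s * dv k s)) with (2 * du k s * (lam * ddu k s) + 2 * dv k s * (lam * ddv k s)) by ring.
    replace (lam * ddu k s) with (- du k s - gradL n d X y (theta_of u v s) k * v k s) by lra.
    replace (lam * ddv k s) with (- dv k s - gradL n d X y (theta_of u v s) k * u k s) by lra. ring. }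
  assert (HPp : forall s, 0 <= s -> 0 <= P s) by (intros; unfold P, Pf; apply rsum_nonneg; intros; pose proof (pow2_ge_0 (du k s)); pose proof (pow2_ge_0 (dv k s)); lra).
  assert (HNp : forall s, 0 <= s -> 0 <= N s) by (intros; unfold N, Nf; apply rsum_nonneg; intros; apply Rmult_le_pos; [apply pow2_ge_0| pose proof (pow2_ge_0 (u k s)); pose proof (pow2_ge_0 (v k s)); lra]).
  pose proof (energy lam P Z ell Pd Hell HP HPd HPp) as HE.
  remember (lam / 2 * P 0 + ell 0) as E0 eqn:HE0.
  assert (HG2ell : forall s, eta * G2s s <= ell s).
  { intros s. unfold G2s, ell. apply Hdesc. }
  assert (HG2s_nonneg : forall s, 0 <= G2s s) by (intros; apply G2_nonneg).
  remember (E0 / eta) as Gs eqn:HGs.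
  assert (HG2b : forall s, 0 <= s -> G2s s <= Gs).
  { intros s Hs. rewrite HGs. specialize (HE s Hs). specialize (HPp s Hs). specialize (HG2ell s).
    apply Rmult_le_reg_l with eta; auto. replace (eta * (E0 / eta)) with E0 by (field; lra).
    assert (0 <= lam / 2 * P s) by (apply Rmult_le_pos; lra). lra. }
  assert (Hgk2 : forall s k, (k < d)%nat -> gk n d X y u v s k ^ 2 <= G2s s).
  { intros s k Hk. unfold G2s, G2, gk. apply (rsum_single_le d (fun k => gradL n d X y (theta_of u v s) k ^ 2)); auto.
    intros; apply pow2_ge_0. }
  remember ((Gs + 1) / 2) as Gc eqn:HGc.
  assert (Hgk : forall s k, (k < d)%nat -> 0 <= s -> Rabs (gk n d X y u v s k) <= Gc).
  { intros s k Hk Hs. eapply Rle_trans. apply L2. rewrite HGc. specialize (Hgk2 s k Hk). specialize (HG2b s Hs). lra. }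
  assert (HGc0 : 0 <= Gc).
  { specialize (HG2b 0 (Rle_refl 0)). specialize (HG2s_nonneg 0). rewrite HGc. lra. }
  remember (Gc + 2 * betaX n d X * M2 / INR n) as c1 eqn:Hc1.
  assert (Hc1p : 0 <= c1).
  { rewrite Hc1. pose proof (betaX_nonneg n d X). assert (0 <= 2 * betaX n d X * M2 / INR n).
    apply Rmult_le_pos. apply Rmult_le_pos; [lra|auto]. apply Rlt_le, Rinv_0_lt_compat; auto. lra. }
  assert (HZd : forall s, 0 <= s -> lam * Zd s <= - Z s - N s + lam * c1 * P s).
  { intros s Hs. unfold Zd, Z, N, P, Zf, Nf, Pf. rewrite rsum_plus, grad_quad, Rmult_plus_distr_l.
    assert (A1 : lam * rsum d (fun k => thdd u v du dv ddu ddv s k * gk n d X y u v s k) <=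
       - rsum d (fun k => thd u v du dv s k * gk n d X y u v s k) - rsum d (fun k => gk n d X y u v s k ^ 2 * (u k s ^ 2 + v k s ^ 2))
       + lam * Gc * rsum d (fun k => du k s ^ 2 + dv k s ^ 2)).
    { rewrite <- rsum_scal, <- rsum_scal.
      replace (- rsum d (fun k => thd u v du dv s k * gk n d X y u v s k) - rsum d (fun k => gk n d X y u v s k ^ 2 * (u k s ^ 2 + v k s ^ 2))
       + rsum d (fun k => lam * Gc * (du k s ^ 2 + dv k s ^ 2))) with
        (rsum d (fun k => - (thd u v du dv s k * gk n d X y u v s k) - gk n d X y u v s k ^ 2 * (u k s ^ 2 + v k s ^ 2)
       + lam * Gc * (du k s ^ 2 + dv k s ^ 2))) by (rewrite rsum_plus, rsum_minus; replace (fun k => - (thd u v du dv s k * gk n d X y u v s k)) with (fun k => (-1) * (thd u v du dv s k * gk n d X y u v s k)) by (apply functional_extensionality; intros; ring); rewrite rsum_scal; ring).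
      apply rsum_le; intros k Hk. destruct (Hode k s Hk Hs) as [E1 E2]. unfold thdd, thd. fold (gk n d X y u v s k) in E1, E2.
      replace (lam * ((ddu k s * v k s + du k s * dv k s + (du k s * dv k s + u k s * ddv k s)) * gk n d X y u v s k))
        with ((lam * ddu k s) * v k s * gk n d X y u v s k + lam * (2 * gk n d X y u v s k * du k s * dv k s) + u k s * (lam * ddv k s) * gk n d X y u v s k) by ring.
      replace (lam * ddu k s) with (- du k s - gk n d X y u v s k * v k s) by lra.
      replace (lam * ddv k s) with (- dv k s - gk n d X y u v s k * u k s) by lra.
      pose proof (L4 _ _ (du k s) (dv k s) (Hgk s k Hk Hs)).
      assert (lam * (2 * gk n d X y u v s k * du k s * dv k s) <= lam * (Gc * (du k s ^ 2 + dv k s ^ 2))) by (apply Rmult_le_compat_l; lra).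
      nra. }
    assert (A2 : lam * (/ INR n * rsum n (fun i => inner d (X i) (thd u v du dv s) ^ 2)) <=
      lam * (2 * betaX n d X * M2 / INR n) * rsum d (fun k => du k s ^ 2 + dv k s ^ 2)).
    { rewrite Rmult_assoc. apply Rmult_le_compat_l. lra.
      apply Rle_trans with (/ INR n * (betaX n d X * rsum d (fun k => thd u v du dv s k ^ 2))).
      apply Rmult_le_compat_l. apply Rlt_le, Rinv_0_lt_compat; auto. apply inner_sq_bound.
      replace (2 * betaX n d X * M2 / INR n * rsum d (fun k => du k s ^ 2 + dv k s ^ 2)) with
        (/ INR n * (betaX n d X * (2 * M2 * rsum d (fun k => du k s ^ 2 + dv k s ^ 2)))) by (field; lra).
      apply Rmult_le_compat_l. apply Rlt_le, Rinv_0_lt_compat; auto.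
      apply Rmult_le_compat_l. apply betaX_nonneg. rewrite <- rsum_scal. apply rsum_le; intros k Hk.
      unfold thd. eapply Rle_trans. apply L3. specialize (Hu2 k s Hk Hs). specialize (Hv2 k s Hk Hs).
      pose proof (pow2_ge_0 (du k s)). pose proof (pow2_ge_0 (dv k s)).
      assert (du k s ^ 2 * v k s ^ 2 <= du k s ^ 2 * M2) by (apply Rmult_le_compat_l; auto).
      assert (u k s ^ 2 * dv k s ^ 2 <= M2 * dv k s ^ 2) by (apply Rmult_le_compat_r; auto). lra. }
    rewrite Hc1. lra. }
  assert (HZb : forall s, 0 <= s -> Rabs (Z s) <= (P s + N s) / 2).
  { intros s Hs. unfold Z, P, N, Zf, Pf, Nf. eapply Rle_trans. apply rsum_abs.
    replace ((rsum d (fun k => du k s ^ 2 + dv k s ^ 2) + rsum d (fun k => gk n d X y u v s k ^ 2 * (u k s ^ 2 + v k s ^ 2))) / 2)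
      with (rsum d (fun k => (du k s ^ 2 + dv k s ^ 2 + gk n d X y u v s k ^ 2 * (u k s ^ 2 + v k s ^ 2)) / 2)).
    apply rsum_le; intros k Hk. unfold thd.
    replace ((du k s * v k s + u k s * dv k s) * gk n d X y u v s k) with (du k s * (v k s * gk n d X y u v s k) + dv k s * (u k s * gk n d X y u v s k)) by ring.
    eapply Rle_trans. apply L1. right. field.
    rewrite <- rsum_plus. unfold Rdiv. rewrite rsum_scalr. auto. }
  assert (HNG : forall s, 0 <= s -> N s <= (2 * M2 + 1) * G2s s).
  { intros s Hs. unfold N, Nf, G2s, G2. rewrite <- rsum_scal. apply rsum_le; intros k Hk. unfold gk.
    specialize (Hu2 k s Hk Hs). specialize (Hv2 k s Hk Hs). pose proof (pow2_ge_0 (gradL n d X y (theta_of u v s) k)).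
    rewrite Rmult_comm. apply Rmult_le_compat_r; auto. lra. }
  assert (HGN : forall s, T <= s -> cD * G2s s <= N s).
  { intros s Hs. assert (0 <= s) by lra. unfold N, Nf, G2s, G2. rewrite <- rsum_scal. apply rsum_le; intros k Hk. unfold gk.
    specialize (HDl k s Hk Hs). cbv beta in HDl. pose proof (pow2_ge_0 (gradL n d X y (theta_of u v s) k)).
    assert (Rabs (u k s ^ 2 - v k s ^ 2) <= u k s ^ 2 + v k s ^ 2).
    { apply Rabs_le. pose proof (pow2_ge_0 (u k s)). pose proof (pow2_ge_0 (v k s)). lra. }
    rewrite (Rmult_comm cD). apply Rmult_le_compat_l; auto. lra. }
  remember (eta / (2 * M2 + 1)) as c2 eqn:Hc2.
  assert (Hc2p : 0 < c2) by (rewrite Hc2; apply Rdiv_lt_0_compat; lra).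
  assert (Hlow : forall s, 0 <= s -> c2 * N s <= ell s).
  { intros s Hs. eapply Rle_trans; [|apply HG2ell]. rewrite Hc2.
    apply Rle_trans with (eta / (2 * M2 + 1) * ((2 * M2 + 1) * G2s s)).
    apply Rmult_le_compat_l. apply Rlt_le; rewrite <- Hc2; auto. apply HNG; auto. right; field; lra. }
  assert (Hup : forall s, T <= s -> ell s <= Cpl / cD * N s).
  { intros s Hs. unfold ell. eapply Rle_trans. apply HPL. fold (G2s s).
    apply Rle_trans with (Cpl / cD * (cD * G2s s)). right; field; lra.
    apply Rmult_le_compat_l. apply Rlt_le, Rdiv_lt_0_compat; auto. apply HGN; auto. }
  assert (Hg : forall s, T <= s -> cD * gj s ^ 2 <= N s).
  { intros s Hs. eapply Rle_trans; [|apply HGN; auto]. apply Rmult_le_compat_l. lra. apply Hgk2; auto. }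
  assert (HGs2 : forall s, 0 <= s -> gj s ^ 2 <= Gs).
  { intros s Hs. eapply Rle_trans. apply Hgk2; auto. apply HG2b; auto. }
  destruct (lyap lam c1 c2 (Cpl / cD) cD Gs T P Z N ell gj Pd Zd) as [B [kap [Hkap HB]]]; auto.
  apply Rdiv_lt_0_compat; auto.
  destruct (sq_to_abs gj B kap lam Hkap Hlam HB) as [K [mu [Hmu [Hmul Hgb]]]].
  assert (Hcont : forall s, 0 <= s -> continuous gj s).
  { intros s Hs. apply (ex_derive_continuous gj). eexists. apply (gk_derive n d X y u v du dv ddu ddv s j (Hder' s Hs)). }
  exact (tail gj K mu lam Hlam Hmu Hmul Hcont Hgb).
Qed.
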